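(* Let $(S,T)$ be bivariate normal with standard normal margins and correlation $\rho\in(-1,1)$, and let $A = \sqrt{2\pi}\,S$, $B = \sqrt{2\pi}\,T$. Then $\mathbb E[\max(A,0)] = \mathbb E[\max(B,0)] = 1$ and for $(x,y)\in[0,\infty)^2$ with $x+y>0$, \[ \mathbb E[\max(xA, yB, 0)] = \frac12(x+y)\Biggl(1 + \sqrt{1 - 2(\rho+1)\frac{xy}{(x+y)^2}}\Biggr). \] Equivalently the Pickands function $D_\rho(t) = \ell_\rho(1-t,t)$ equals $\frac12\{1 + \sqrt{1 - 2(\rho+1)t(1-t)}\}$, $t\in[0,1]$. *)

(* Defs.v *)
From Stdlib Require Import Reals Lra.
Open Scope R_scope.

Definition phi2 (rho s t : R) : R :=
  / (2 * PI * sqrt (1 - rho ^ 2)) *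
  exp (- (s ^ 2 - 2 * rho * s * t + t ^ 2) / (2 * (1 - rho ^ 2))).

Definition improper_int (f : R -> R) (l : R) : Prop :=
  forall eps, 0 < eps -> exists M, forall a b, a <= - M -> M <= b ->
    exists pr : Riemann_integrable f a b, Rabs (RiemannInt pr - l) < eps.

(* bvn_expect rho g v : E[g(S,T)] = v, for (S,T) bivariate standard normal
   with correlation rho, computed as the iterated improper integral
   int ( int g(s,t) phi2(s,t) dt ) ds  (for nonnegative continuous g this
   coincides with the Lebesgue expectation, by Tonelli). *)
Definition bvn_expect (rho : R) (g : R -> R -> R) (v : R) : Prop :=
  exists F : R -> R,
    (forall s, improper_int (fun t => g s t * phi2 rho s t) (F s)) /\
    improper_int F v.

(* Main.v *)
Require Import Defs.
From Stdlib Require Import Reals.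
From Coquelicot Require Import Coquelicot.
From Stdlib Require Import Lra FunctionalExtensionality.
Open Scope R_scope.


Lemma ex_RInt_cont (f : R -> R) a b : (forall z, Rmin a b <= z <= Rmax a b -> continuous f z) -> ex_RInt f a b.
Proof. apply (ex_RInt_continuous (V:=R_CompleteNormedModule)). Qed.
Lemma cont_of_der (f : R -> R) x : ex_derive f x -> continuous f x.
Proof. apply (ex_derive_continuous (K:=R_AbsRing) (V:=R_NormedModule)). Qed.

Lemma RInt_correct_R (f : R -> R) a b : ex_RInt f a b -> is_RInt f a b (RInt f a b).
Proof. apply (RInt_correct (V:=R_CompleteNormedModule)). Qed.
Lemma is_RInt_unique_R (f : R -> R) a b l : is_RInt f a b l -> RInt f a b = l.
Proof. apply (is_RInt_unique (V:=R_CompleteNormedModule)). Qed.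

Lemma RInt_scal_R (f : R -> R) k a b : ex_RInt f a b -> RInt (fun t => k * f t) a b = k * RInt f a b.
Proof. apply (RInt_scal (V:=R_CompleteNormedModule)). Qed.
Lemma RInt_comp_lin_R (f : R -> R) u v a b : ex_RInt f (u*a+v) (u*b+v) -> RInt (fun y => u * f (u * y + v)) a b = RInt f (u*a+v) (u*b+v).
Proof. apply (RInt_comp_lin (V:=R_CompleteNormedModule)). Qed.

Ltac req := match goal with |- ?a = ?b => change (@eq R a b) end.

Definition gs (t : R) : R := exp (- (t ^ 2) / 2).
Definition GI (x : R) : R := RInt gs 0 x.
Definition hf (u t : R) : R := exp (- (u ^ 2 * (1 + t ^ 2)) / 2) / (1 + t ^ 2).
Definition HI (x : R) : R := RInt (hf x) 0 1.

Lemma gs_cont x : continuous gs x.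
Proof. apply cont_of_der; unfold gs; auto_derive; auto. Qed.

Lemma gs_ex a b : ex_RInt gs a b.
Proof. apply ex_RInt_cont; intros; apply gs_cont. Qed.

Lemma GI_deriv (x : R) : is_derive GI x (gs x).
Proof.
  apply (is_derive_RInt gs GI 0 x).
  - apply filter_forall; intros y. apply RInt_correct_R, gs_ex.
  - apply gs_cont.
Qed.

Lemma pos1t t : 0 < 1 + t ^ 2.
Proof. nra. Qed.

Lemma hf_deriv (u t : R) : is_derive (fun z => hf z t) u (- u * exp (- (u ^ 2 * (1 + t ^ 2)) / 2)).
Proof.
  unfold hf. auto_derive; auto.
  simpl. unfold Rdiv. field. generalize (pos1t t); simpl; lra.
Qed.

Lemma Derive_hf u t : Derive (fun z : R => hf z t) u = - u * exp (- (u ^ 2 * (1 + t ^ 2)) / 2).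
Proof. apply is_derive_unique, hf_deriv. Qed.

Lemma hf_cont u t : continuous (hf u) t.
Proof. apply cont_of_der; unfold hf; auto_derive. generalize (pos1t t); lra. Qed.

Lemma HI_deriv (x : R) : is_derive HI x (- exp (- (x^2) / 2) * GI x).
Proof.
  unfold HI.
  assert (H := is_derive_RInt_param hf 0 1 x).
  replace (- exp (- (x^2) / 2) * GI x) with
    (RInt (fun t => Derive (fun u => hf u t) x) 0 1).
  apply H.
  - apply filter_forall; intros y t _. eexists. apply hf_deriv.
  - intros t _.
    apply continuity_2d_pt_ext with (fun u t => - u * exp (- (u ^ 2 * (1 + t ^ 2)) / 2)).
    + intros; symmetry; apply Derive_hf.
    + apply continuity_2d_pt_mult.
      * apply continuity_2d_pt_opp, continuity_2d_pt_id1.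
      * apply continuity_1d_2d_pt_comp.
        -- apply derivable_continuous_pt, derivable_pt_exp.
        -- apply continuity_2d_pt_mult.
           ++ apply continuity_2d_pt_opp. apply continuity_2d_pt_mult.
              ** simpl. apply continuity_2d_pt_mult. apply continuity_2d_pt_id1.
                 apply continuity_2d_pt_mult. apply continuity_2d_pt_id1. apply continuity_2d_pt_const.
              ** apply continuity_2d_pt_plus. apply continuity_2d_pt_const.
                 simpl. apply continuity_2d_pt_mult. apply continuity_2d_pt_id2.
                 apply continuity_2d_pt_mult. apply continuity_2d_pt_id2. apply continuity_2d_pt_const.
           ++ apply continuity_2d_pt_const.
  - apply filter_forall; intros y. apply ex_RInt_cont; intros; apply hf_cont.
  - rewrite (RInt_ext _ (fun t => (- exp (- (x^2) / 2)) * (x * gs (x * t + 0)))).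
    + rewrite RInt_scal_R. rewrite RInt_comp_lin_R. unfold GI. f_equal; f_equal; ring.
      apply gs_ex.
      apply ex_RInt_cont; intros. apply cont_of_der. unfold gs. auto_derive. auto.
    + intros t _. rewrite Derive_hf.
      unfold gs.
      replace (- (x ^ 2 * (1 + t ^ 2)) / 2) with (- (x^2)/2 + - ((x * t + 0) ^ 2) / 2) by (unfold Rdiv; ring).
      rewrite exp_plus. match goal with |- ?a = ?b => change (@eq R a b) end. ring.
Qed.

Definition FI (x : R) : R := GI x ^ 2 + 2 * HI x.

Lemma Derive_GI (x : R) : Derive GI x = gs x.
Proof. apply is_derive_unique, GI_deriv. Qed.
Lemma Derive_HI (x : R) : Derive HI x = - exp (- (x^2) / 2) * GI x.
Proof. apply is_derive_unique, HI_deriv. Qed.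

Lemma FI_deriv (x : R) : is_derive FI x 0.
Proof.
  unfold FI. auto_derive.
  - split. eexists; apply GI_deriv. split; auto. eexists; apply HI_deriv.
  - rewrite Derive_GI, Derive_HI. unfold gs. simpl. ring.
Qed.

Lemma RInt_zero_R a b : RInt (fun _ => 0) a b = 0.
Proof. rewrite (RInt_const (V:=R_CompleteNormedModule)). unfold scal; simpl; unfold mult; simpl. ring. Qed.

Lemma FI_const (x : R) : FI x = FI 0.
Proof.
  assert (H := is_RInt_derive (V:=R_CompleteNormedModule) FI (fun _ => 0) 0 x).
  assert (H1 : is_RInt (fun _ : R => 0) 0 x (minus (FI x) (FI 0))).
  { apply H. intros; apply FI_deriv. intros; apply continuous_const. }
  apply is_RInt_unique_R in H1. rewrite RInt_zero_R in H1.
  unfold minus, plus, opp in H1; simpl in H1. lra.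
Qed.

Lemma atan_deriv (t : R) : is_derive atan t (/ (1 + t ^ 2)).
Proof. apply is_derive_Reals, derivable_pt_lim_atan. Qed.

Lemma HI0 : HI 0 = PI / 4.
Proof.
  unfold HI. apply is_RInt_unique_R.
  assert (H := is_RInt_derive (V:=R_CompleteNormedModule) atan (fun t => / (1 + t ^ 2)) 0 1).
  rewrite <- atan_1. replace (atan 1) with (minus (atan 1) (atan 0)).
  2:{ rewrite atan_0. unfold minus, plus, opp; simpl. ring. }
  eapply is_RInt_ext. 2: apply H.
  - intros t _. unfold hf. replace (- (0 ^ 2 * (1 + t ^ 2)) / 2) with 0 by (unfold Rdiv; ring).
    rewrite exp_0. req. unfold Rdiv. ring.
  - intros; apply atan_deriv.
  - intros; apply cont_of_der. auto_derive. generalize (pos1t x); simpl; lra.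
Qed.

Lemma GI0 : GI 0 = 0.
Proof. unfold GI. apply (RInt_point (V:=R_CompleteNormedModule)). Qed.

Lemma FI_val (x : R) : GI x ^ 2 + 2 * HI x = PI / 2.
Proof. change (FI x = PI/2). rewrite FI_const. unfold FI. rewrite GI0, HI0. field. Qed.

Lemma HI_bounds (x : R) : 0 <= HI x <= exp (- (x^2) / 2).
Proof.
  unfold HI. split.
  - apply RInt_ge_0. lra. apply ex_RInt_cont; intros; apply hf_cont.
    intros t _. unfold hf. apply Rlt_le, Rdiv_lt_0_compat. apply exp_pos. apply pos1t.
  - replace (exp (- (x^2) / 2)) with (RInt (fun _ => exp (- (x^2) / 2)) 0 1).
    2:{ rewrite (RInt_const (V:=R_CompleteNormedModule)). unfold scal; simpl; unfold mult; simpl. ring. }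
    apply RInt_le. lra. apply ex_RInt_cont; intros; apply hf_cont.
    apply ex_RInt_cont; intros; apply continuous_const.
    intros t _. unfold hf.
    assert (H1 : exp (- (x ^ 2 * (1 + t ^ 2)) / 2) <= exp (- (x ^ 2) / 2)).
    { apply exp_le_3 || idtac. destruct (Req_dec (x ^ 2 * (1 + t ^ 2) / 2) ((x^2)/2)) as [E|E].
      - replace (- (x ^ 2 * (1 + t ^ 2)) / 2) with (- (x^2)/2). lra.
        unfold Rdiv in *. lra.
      - apply Rlt_le, exp_increasing. assert (0 <= x^2 * t^2) by (apply Rmult_le_pos; apply pow2_ge_0 || nra). unfold Rdiv in *. nra. }
    assert (H2 : 1 <= 1 + t ^ 2) by (generalize (pow2_ge_0 t); lra).
    apply Rle_trans with (exp (- (x ^ 2 * (1 + t ^ 2)) / 2)); auto.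
    unfold Rdiv at 1. rewrite <- (Rmult_1_r (exp _)) at 2. apply Rmult_le_compat_l.
    apply Rlt_le, exp_pos. rewrite <- Rinv_1. apply Rinv_le_contravar; lra.
Qed.

Lemma GI_nonneg (x : R) : 0 <= x -> 0 <= GI x.
Proof.
  intros. unfold GI. apply RInt_ge_0; auto. apply gs_ex.
  intros; unfold gs; apply Rlt_le, exp_pos.
Qed.

Definition limp (f : R -> R) (l : R) := forall eps, 0 < eps -> exists M, forall x, M <= x -> Rabs (f x - l) < eps.
Definition limm (f : R -> R) (l : R) := forall eps, 0 < eps -> exists M, forall x, x <= M -> Rabs (f x - l) < eps.

Lemma improper_split (f h1 h2 Q1 Q2 : R -> R) (t0 L1 L2 : R) :
 (forall t, is_derive Q1 t (h1 t)) -> (forall t, is_derive Q2 t (h2 t)) ->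
 (forall t, continuous h1 t) -> (forall t, continuous h2 t) ->
 (forall t, t <= t0 -> f t = h1 t) -> (forall t, t0 <= t -> f t = h2 t) ->
 limm Q1 L1 -> limp Q2 L2 ->
 improper_int f ((Q1 t0 - L1) + (L2 - Q2 t0)).
Proof.
  intros D1 D2 C1 C2 E1 E2 LQ1 LQ2 eps Heps.
  destruct (LQ1 (eps/2)) as [M1 HM1]; [lra|].
  destruct (LQ2 (eps/2)) as [M2 HM2]; [lra|].
  exists (Rabs M1 + Rabs M2 + Rabs t0 + 1). intros a b Ha Hb.
  assert (Ha1 : a <= M1) by (generalize (Rle_abs (-M1)) (Rabs_pos M2) (Rabs_pos t0); rewrite Rabs_Ropp; lra).
  assert (Ha0 : a <= t0) by (generalize (Rle_abs (-t0)) (Rabs_pos M2) (Rabs_pos M1); rewrite Rabs_Ropp; lra).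
  assert (Hb2 : M2 <= b) by (generalize (Rle_abs M2) (Rabs_pos M1) (Rabs_pos t0); lra).
  assert (Hb0 : t0 <= b) by (generalize (Rle_abs t0) (Rabs_pos M2) (Rabs_pos M1); lra).
  assert (I1 : is_RInt f a t0 (minus (Q1 t0) (Q1 a))).
  { apply is_RInt_ext with h1.
    - intros x Hx. rewrite Rmin_left in Hx by lra. rewrite Rmax_right in Hx by lra. symmetry; apply E1; lra.
    - apply (is_RInt_derive (V:=R_CompleteNormedModule)); intros; auto. }
  assert (I2 : is_RInt f t0 b (minus (Q2 b) (Q2 t0))).
  { apply is_RInt_ext with h2.
    - intros x Hx. rewrite Rmin_left in Hx by lra. rewrite Rmax_right in Hx by lra. symmetry; apply E2; lra.
    - apply (is_RInt_derive (V:=R_CompleteNormedModule)); intros; auto. }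
  assert (I := is_RInt_Chasles _ _ _ _ _ _ I1 I2).
  assert (X : ex_RInt f a b) by (eexists; exact I).
  exists (ex_RInt_Reals_0 _ _ _ X).
  rewrite <- RInt_Reals. apply is_RInt_unique_R in I. rewrite I.
  unfold minus, plus, opp; simpl.
  specialize (HM1 a Ha1). specialize (HM2 b Hb2).
  replace (Q1 t0 + - Q1 a + (Q2 b + - Q2 t0) - (Q1 t0 - L1 + (L2 - Q2 t0)))
    with (- (Q1 a - L1) + (Q2 b - L2)) by ring.
  eapply Rle_lt_trans. apply Rabs_triang. rewrite Rabs_Ropp. lra.
Qed.

Definition s2p := sqrt (2 * PI).
Definition phi (u : R) : R := / s2p * exp (- (u ^ 2) / 2).
Definition Phi (x : R) : R := / 2 + / s2p * GI x.

Lemma s2p_pos : 0 < s2p.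
Proof. unfold s2p. apply sqrt_lt_R0. generalize PI_RGT_0; lra. Qed.

Lemma Phi_deriv (x : R) : is_derive Phi x (phi x).
Proof.
  unfold Phi, phi. auto_derive. eexists; apply GI_deriv.
  rewrite Derive_GI. unfold gs. req. ring.
Qed.

Lemma Derive_Phi (x : R) : Derive Phi x = phi x.
Proof. apply is_derive_unique, Phi_deriv. Qed.

Lemma ex_derive_Phi (x : R) : ex_derive Phi x.
Proof. eexists; apply Phi_deriv. Qed.

Lemma GI_odd (x : R) : GI (- x) = - GI x.
Proof.
  unfold GI.
  replace (RInt gs 0 (-x)) with (RInt gs (-1 * 0 + 0) (-1 * x + 0)) by (f_equal; ring).
  rewrite <- (RInt_comp_lin_R gs (-1) 0 0 x) by apply gs_ex.
  rewrite (RInt_ext _ (fun y => -1 * gs y)).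
  rewrite RInt_scal_R by apply gs_ex. ring.
  intros y _. unfold gs. f_equal. f_equal. f_equal. ring.
Qed.

Lemma Phi_opp (x : R) : Phi (- x) = 1 - Phi x.
Proof. unfold Phi. rewrite GI_odd. field. apply Rgt_not_eq, s2p_pos. Qed.

Definition cpi := sqrt (PI / 2).

Lemma cpi_pos : 0 < cpi.
Proof. unfold cpi. apply sqrt_lt_R0. generalize PI_RGT_0; lra. Qed.

Lemma cpi_s2p : cpi / s2p = / 2.
Proof.
  assert (P := PI_RGT_0).
  assert (E : cpi * s2p = PI).
  { unfold cpi, s2p. rewrite <- sqrt_mult by lra.
    replace (PI / 2 * (2 * PI)) with (PI * PI) by field. apply sqrt_square; lra. }
  assert (S := s2p_pos).
  apply (Rmult_eq_reg_r (s2p * s2p)). 2: nra.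
  replace (cpi / s2p * (s2p * s2p)) with (cpi * s2p) by (field; lra).
  rewrite E. unfold s2p. rewrite sqrt_sqrt by lra. field.
Qed.

Lemma GI_bounds (x : R) : 0 <= x -> 0 <= GI x <= cpi /\ cpi - GI x <= 2 * exp (- (x^2) / 2) / cpi.
Proof.
  intros Hx. assert (G0 := GI_nonneg x Hx). assert (V := FI_val x). assert (HB := HI_bounds x).
  assert (C := cpi_pos).
  assert (C2 : cpi * cpi = PI / 2) by (unfold cpi; apply sqrt_sqrt; generalize PI_RGT_0; lra).
  assert (GI x <= cpi) by nra.
  split. lra.
  apply (Rmult_le_reg_r cpi); auto.
  replace (2 * exp (- x ^ 2 / 2) / cpi * cpi) with (2 * exp (- x ^ 2 / 2)) by (field; lra).
  nra.
Qed.

Lemma exp_small (d : R) : 0 < d -> exists M, 0 <= M /\ forall x, M <= Rabs x -> exp (- (x^2) / 2) < d.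
Proof.
  intros Hd. exists (2 / d + 1). split. apply Rlt_le. assert (0 < 2/d) by (apply Rdiv_lt_0_compat; lra). lra.
  intros x Hx.
  assert (Hd2 : 0 < 2 / d) by (apply Rdiv_lt_0_compat; lra).
  assert (A : 2 / d <= x ^ 2).
  { assert (x ^ 2 = Rabs x * Rabs x) by (rewrite <- Rabs_mult; simpl; rewrite Rmult_1_r; symmetry; apply Rabs_right; nra).
    nra. }
  assert (B : 1 + x^2/2 < exp (x^2/2)).
  { apply exp_ineq1. assert (0 < x^2) by lra. lra. }
  replace (- (x^2)/2) with (- (x^2/2)) by field. rewrite exp_Ropp.
  assert (0 < x^2/2) by lra.
  apply (Rmult_lt_reg_r (exp (x^2/2))). apply exp_pos.
  rewrite Rinv_l by (apply Rgt_not_eq, exp_pos).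
  assert (1/d <= x^2/2) by (unfold Rdiv in *; lra).
  assert (d * (1/d) = 1) by (field; lra). nra.
Qed.

Lemma Phi_limp : limp Phi 1.
Proof.
  intros eps He. assert (C := cpi_pos). assert (S := s2p_pos).
  destruct (exp_small (eps * cpi * s2p / 4)) as [M [HM0 HM]].
  { apply Rmult_lt_0_compat; [|lra]. apply Rmult_lt_0_compat; auto. apply Rmult_lt_0_compat; auto. }
  exists M. intros x Hx.
  assert (Hx0 : 0 <= x) by lra.
  destruct (GI_bounds x Hx0) as [[B1 B2] B3].
  assert (E := HM x). rewrite Rabs_right in E by lra. specialize (E Hx).
  assert (Ph : Phi x - 1 = - ((cpi - GI x) / s2p)).
  { unfold Phi. assert (CS := cpi_s2p). unfold Rdiv in CS |- *. rewrite <- CS. replace 1 with (2 * (cpi * / s2p)) by (rewrite CS; field). field. lra. }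
  rewrite Ph, Rabs_Ropp. rewrite Rabs_right.
  2:{ apply Rle_ge. apply Rdiv_le_0_compat; lra. }
  apply (Rmult_lt_reg_r s2p); auto.
  replace ((cpi - GI x) / s2p * s2p) with (cpi - GI x) by (field; lra).
  eapply Rle_lt_trans. apply B3.
  apply (Rmult_lt_reg_r cpi); auto.
  replace (2 * exp (- x ^ 2 / 2) / cpi * cpi) with (2 * exp (- x ^ 2 / 2)) by (field; lra).
  assert (0 < eps * s2p * cpi) by (apply Rmult_lt_0_compat; [apply Rmult_lt_0_compat|]; auto). assert (eps*cpi*s2p = eps*s2p*cpi) by ring. lra.
Qed.

Lemma Phi_limm : limm Phi 0.
Proof.
  intros eps He. destruct (Phi_limp eps He) as [M HM]. exists (- M). intros x Hx.
  replace x with (- - x) by ring. rewrite Phi_opp.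
  replace (1 - Phi (- x) - 0) with (- (Phi (-x) - 1)) by ring. rewrite Rabs_Ropp. apply HM. lra.
Qed.

Lemma Phi_bounds (x : R) : 0 <= Phi x <= 1.
Proof.
  assert (C := cpi_pos). assert (S := s2p_pos). assert (CS := cpi_s2p).
  assert (K : forall y, 0 <= y -> / 2 <= Phi y <= 1).
  { intros y Hy. destruct (GI_bounds y Hy) as [[B1 B2] _]. unfold Phi.
    split. assert (0 <= / s2p * GI y) by (apply Rmult_le_pos; [apply Rlt_le, Rinv_0_lt_compat|]; lra). lra.
    assert (/ s2p * GI y <= / 2). { rewrite <- CS. unfold Rdiv. rewrite Rmult_comm. apply Rmult_le_compat_r; [apply Rlt_le, Rinv_0_lt_compat|]; lra. }
    lra. }
  destruct (Rle_dec 0 x). specialize (K x r). lra.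
  replace x with (- - x) by ring. rewrite Phi_opp. specialize (K (-x)). lra.
Qed.

Lemma phi_even (x : R) : phi (- x) = phi x.
Proof. unfold phi. f_equal. f_equal. f_equal. ring. Qed.

Lemma phi_pos (x : R) : 0 < phi x.
Proof. unfold phi. apply Rmult_lt_0_compat. apply Rinv_0_lt_compat, s2p_pos. apply exp_pos. Qed.

Lemma phi_small (d : R) : 0 < d -> exists M, 0 <= M /\ forall x, M <= Rabs x -> phi x < d.
Proof.
  intros Hd. assert (S := s2p_pos).
  destruct (exp_small (d * s2p)) as [M [HM0 HM]]. nra.
  exists M. split; auto. intros x Hx. specialize (HM x Hx). unfold phi.
  apply (Rmult_lt_reg_l s2p); auto. rewrite <- Rmult_assoc, Rinv_r, Rmult_1_l by lra. lra.
Qed.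

Lemma phi0 : phi 0 = / s2p.
Proof. unfold phi. replace (- (0^2)/2) with 0 by field. rewrite exp_0. ring. Qed.

Lemma Phi0 : Phi 0 = / 2.
Proof. unfold Phi. rewrite GI0. ring. Qed.

Lemma phi_cont (x : R) : continuous phi x.
Proof. apply cont_of_der. unfold phi. auto_derive. auto. Qed.

Lemma Phi_cont (x : R) : continuous Phi x.
Proof. apply cont_of_der, ex_derive_Phi. Qed.

Lemma limp_const c : limp (fun _ => c) c.
Proof. intros e He. exists 0. intros. replace (c - c) with 0 by ring. rewrite Rabs_R0. lra. Qed.
Lemma limm_const c : limm (fun _ => c) c.
Proof. intros e He. exists 0. intros. replace (c - c) with 0 by ring. rewrite Rabs_R0. lra. Qed.

Lemma limp_plus f g l1 l2 : limp f l1 -> limp g l2 -> limp (fun x => f x + g x) (l1 + l2).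
Proof.
  intros F G e He. destruct (F (e/2)) as [M1 H1]; [lra|]. destruct (G (e/2)) as [M2 H2]; [lra|].
  exists (Rmax M1 M2). intros x Hx.
  specialize (H1 x (Rle_trans _ _ _ (Rmax_l _ _) Hx)). specialize (H2 x (Rle_trans _ _ _ (Rmax_r _ _) Hx)).
  replace (f x + g x - (l1 + l2)) with ((f x - l1) + (g x - l2)) by ring.
  eapply Rle_lt_trans. apply Rabs_triang. lra.
Qed.
Lemma limm_plus f g l1 l2 : limm f l1 -> limm g l2 -> limm (fun x => f x + g x) (l1 + l2).
Proof.
  intros F G e He. destruct (F (e/2)) as [M1 H1]; [lra|]. destruct (G (e/2)) as [M2 H2]; [lra|].
  exists (Rmin M1 M2). intros x Hx.
  specialize (H1 x (Rle_trans _ _ _ Hx (Rmin_l _ _))). specialize (H2 x (Rle_trans _ _ _ Hx (Rmin_r _ _))).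
  replace (f x + g x - (l1 + l2)) with ((f x - l1) + (g x - l2)) by ring.
  eapply Rle_lt_trans. apply Rabs_triang. lra.
Qed.

Lemma limp_scal k f l : limp f l -> limp (fun x => k * f x) (k * l).
Proof.
  intros F e He. destruct (F (e / (Rabs k + 1))) as [M H].
  { apply Rdiv_lt_0_compat; auto. generalize (Rabs_pos k); lra. }
  exists M. intros x Hx. specialize (H x Hx).
  replace (k * f x - k * l) with (k * (f x - l)) by ring. rewrite Rabs_mult.
  assert (0 < Rabs k + 1) by (generalize (Rabs_pos k); lra).
  apply Rle_lt_trans with ((Rabs k + 1) * Rabs (f x - l)).
  apply Rmult_le_compat_r. apply Rabs_pos. lra.
  apply (Rmult_lt_reg_l (/ (Rabs k + 1))). apply Rinv_0_lt_compat; lra.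
  rewrite <- Rmult_assoc, Rinv_l, Rmult_1_l by lra. unfold Rdiv in H. lra.
Qed.
Lemma limm_scal k f l : limm f l -> limm (fun x => k * f x) (k * l).
Proof.
  intros F e He. destruct (F (e / (Rabs k + 1))) as [M H].
  { apply Rdiv_lt_0_compat; auto. generalize (Rabs_pos k); lra. }
  exists M. intros x Hx. specialize (H x Hx).
  replace (k * f x - k * l) with (k * (f x - l)) by ring. rewrite Rabs_mult.
  assert (0 < Rabs k + 1) by (generalize (Rabs_pos k); lra).
  apply Rle_lt_trans with ((Rabs k + 1) * Rabs (f x - l)).
  apply Rmult_le_compat_r. apply Rabs_pos. lra.
  apply (Rmult_lt_reg_l (/ (Rabs k + 1))). apply Rinv_0_lt_compat; lra.
  rewrite <- Rmult_assoc, Rinv_l, Rmult_1_l by lra. unfold Rdiv in H. lra.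
Qed.

Lemma limp_ext f g l : (forall x, f x = g x) -> limp f l -> limp g l.
Proof. intros E F e He. destruct (F e He) as [M H]. exists M. intros. rewrite <- E. auto. Qed.
Lemma limm_ext f g l : (forall x, f x = g x) -> limm f l -> limm g l.
Proof. intros E F e He. destruct (F e He) as [M H]. exists M. intros. rewrite <- E. auto. Qed.

Lemma limp_comp_p f u l : limp f l -> (forall M, exists N, forall t, N <= t -> M <= u t) -> limp (fun t => f (u t)) l.
Proof. intros F U e He. destruct (F e He) as [M H]. destruct (U M) as [N HN]. exists N. intros; auto. Qed.
Lemma limp_comp_m f u l : limm f l -> (forall M, exists N, forall t, N <= t -> u t <= M) -> limp (fun t => f (u t)) l.
Proof. intros F U e He. destruct (F e He) as [M H]. destruct (U M) as [N HN]. exists N. intros; auto. Qed.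
Lemma limm_comp_p f u l : limp f l -> (forall M, exists N, forall t, t <= N -> M <= u t) -> limm (fun t => f (u t)) l.
Proof. intros F U e He. destruct (F e He) as [M H]. destruct (U M) as [N HN]. exists N. intros; auto. Qed.
Lemma limm_comp_m f u l : limm f l -> (forall M, exists N, forall t, t <= N -> u t <= M) -> limm (fun t => f (u t)) l.
Proof. intros F U e He. destruct (F e He) as [M H]. destruct (U M) as [N HN]. exists N. intros; auto. Qed.

Lemma aff_pp k d : 0 < k -> forall M, exists N, forall t, N <= t -> M <= k * t + d.
Proof. intros Hk M. exists ((M - d) / k). intros t Ht.
  apply (Rmult_le_compat_l k) in Ht; [|lra]. replace (k * ((M - d) / k)) with (M - d) in Ht by (field; lra). lra. Qed.
Lemma aff_mm k d : 0 < k -> forall M, exists N, forall t, t <= N -> k * t + d <= M.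
Proof. intros Hk M. exists ((M - d) / k). intros t Ht.
  apply (Rmult_le_compat_l k) in Ht; [|lra]. replace (k * ((M - d) / k)) with (M - d) in Ht by (field; lra). lra. Qed.

Lemma limp_mult0 f g B : limp f 0 -> (forall x, Rabs (g x) <= B) -> limp (fun x => f x * g x) 0.
Proof.
  intros F G e He. assert (HB0 : 0 <= B) by (generalize (G 0) (Rabs_pos (g 0)); lra).
  destruct (F (e / (B + 1))) as [M H]. apply Rdiv_lt_0_compat; lra.
  exists M. intros x Hx. specialize (H x Hx). rewrite Rminus_0_r in *. rewrite Rabs_mult.
  apply Rle_lt_trans with (Rabs (f x) * (B + 1)).
  apply Rmult_le_compat_l. apply Rabs_pos. specialize (G x). lra.
  apply (Rmult_lt_reg_r (/ (B + 1))). apply Rinv_0_lt_compat; lra.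
  rewrite Rmult_assoc, Rinv_r, Rmult_1_r by lra. unfold Rdiv in H. lra.
Qed.
Lemma limm_mult0 f g B : limm f 0 -> (forall x, Rabs (g x) <= B) -> limm (fun x => f x * g x) 0.
Proof.
  intros F G e He. assert (HB0 : 0 <= B) by (generalize (G 0) (Rabs_pos (g 0)); lra).
  destruct (F (e / (B + 1))) as [M H]. apply Rdiv_lt_0_compat; lra.
  exists M. intros x Hx. specialize (H x Hx). rewrite Rminus_0_r in *. rewrite Rabs_mult.
  apply Rle_lt_trans with (Rabs (f x) * (B + 1)).
  apply Rmult_le_compat_l. apply Rabs_pos. specialize (G x). lra.
  apply (Rmult_lt_reg_r (/ (B + 1))). apply Rinv_0_lt_compat; lra.
  rewrite Rmult_assoc, Rinv_r, Rmult_1_r by lra. unfold Rdiv in H. lra.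
Qed.

Lemma phi_limp : limp phi 0.
Proof.
  intros e He. destruct (phi_small e He) as [M [HM0 HM]]. exists M. intros x Hx.
  rewrite Rminus_0_r. rewrite Rabs_right by (apply Rle_ge, Rlt_le, phi_pos).
  apply HM. rewrite Rabs_right; lra.
Qed.
Lemma phi_limm : limm phi 0.
Proof.
  intros e He. destruct (phi_small e He) as [M [HM0 HM]]. exists (- M). intros x Hx.
  rewrite Rminus_0_r. rewrite Rabs_right by (apply Rle_ge, Rlt_le, phi_pos).
  apply HM. rewrite Rabs_left1; lra.
Qed.

Lemma Phi_abs x : Rabs (Phi x) <= 1.
Proof. destruct (Phi_bounds x). rewrite Rabs_right; lra. Qed.

Lemma phi_deriv (x : R) : is_derive phi x (- x * phi x).
Proof. unfold phi. auto_derive; auto. change (x*(x*1)) with (x^2). unfold Rdiv. req. field. apply Rgt_not_eq, s2p_pos. Qed.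
Lemma Derive_phi (x : R) : Derive phi x = - x * phi x.
Proof. apply is_derive_unique, phi_deriv. Qed.
Lemma ex_derive_phi (x : R) : ex_derive phi x.
Proof. eexists; apply phi_deriv. Qed.
Lemma Derive_Phi' (x : R) : Derive (fun y => Phi y) x = phi x.
Proof. apply Derive_Phi. Qed.
Lemma Derive_phi' (x : R) : Derive (fun y => phi y) x = - x * phi x.
Proof. apply Derive_phi. Qed.
Lemma ex_derive_Phi' (x : R) : ex_derive (fun y => Phi y) x.
Proof. apply ex_derive_Phi. Qed.
Lemma ex_derive_phi' (x : R) : ex_derive (fun y => phi y) x.
Proof. apply ex_derive_phi. Qed.
Ltac dsolve := repeat split; try apply ex_derive_Phi'; try apply ex_derive_phi'; try apply ex_derive_Phi; try apply ex_derive_phi; auto.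
Ltac drw := repeat rewrite ?Derive_Phi', ?Derive_phi', ?Derive_Phi, ?Derive_phi.

Definition sig (rho : R) := sqrt (1 - rho ^ 2).

Lemma sig_pos rho : -1 < rho < 1 -> 0 < sig rho.
Proof. intros H. unfold sig. apply sqrt_lt_R0. simpl. nra. Qed.
Lemma sig_sq rho : -1 < rho < 1 -> sig rho * sig rho = 1 - rho ^ 2.
Proof. intros H. unfold sig. apply sqrt_sqrt. simpl. nra. Qed.
Lemma s2p_sq : s2p * s2p = 2 * PI.
Proof. unfold s2p. apply sqrt_sqrt. generalize PI_RGT_0; lra. Qed.

Lemma phi2_dec rho s t : -1 < rho < 1 ->
  phi2 rho s t = phi s * (/ sig rho * phi ((t - rho * s) / sig rho)).
Proof.
  intros H. assert (P := sig_pos rho H). assert (Q := sig_sq rho H). assert (S := s2p_pos).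
  assert (S2 := s2p_sq).
  unfold phi2, phi. fold (sig rho).
  replace (/ s2p * exp (- s ^ 2 / 2) * (/ sig rho * (/ s2p * exp (- ((t - rho * s) / sig rho) ^ 2 / 2))))
    with (/ (s2p * s2p * sig rho) * (exp (- s ^ 2 / 2) * exp (- ((t - rho * s) / sig rho) ^ 2 / 2))).
  2:{ field. split; lra. }
  rewrite <- exp_plus, S2. f_equal. f_equal.
  replace (- ((t - rho * s) / sig rho) ^ 2 / 2) with (- (t - rho*s)^2 / (2 * (sig rho * sig rho))) by (field; lra). rewrite Q. field. simpl; nra.
Qed.

Lemma rmax3 x y : Rmax (Rmax x y) 0 = Rmax (Rmax x 0) y.
Proof. unfold Rmax. repeat destruct Rle_dec; lra. Qed.

Definition cc (a s : R) := Rmax (a * s) 0.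
Definition zz (rho s t : R) := (t - rho * s) / sig rho.
Definition Fin (rho a b s : R) :=
  phi s * cc a s * Phi (zz rho s (cc a s / b)) - 0 +
  (phi s * (-(b * sig rho) * 0 + b * rho * s * 1) -
   phi s * (-(b * sig rho) * phi (zz rho s (cc a s / b)) + b * rho * s * Phi (zz rho s (cc a s / b)))).

Lemma zz_aff rho s t : zz rho s t = / sig rho * t + (- rho * s / sig rho).
Proof. unfold zz. unfold Rdiv. ring. Qed.

Lemma inner_gen rho a b s : -1 < rho < 1 -> 0 <= a -> 0 < b ->
  improper_int (fun t => Rmax (Rmax (a * s) (b * t)) 0 * phi2 rho s t) (Fin rho a b s).
Proof.
  intros Hr Ha Hb. assert (P := sig_pos rho Hr).
  set (c := cc a s).
  assert (Hc : 0 <= c) by (unfold c, cc; apply Rmax_r).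
  unfold Fin. fold c.
  apply (improper_split _
    (fun t => phi s * c * (/ sig rho * phi (zz rho s t)))
    (fun t => phi s * (b * t) * (/ sig rho * phi (zz rho s t)))
    (fun t => phi s * c * Phi (zz rho s t))
    (fun t => phi s * (-(b * sig rho) * phi (zz rho s t) + b * rho * s * Phi (zz rho s t)))).
  - intros t. unfold zz. auto_derive. dsolve.
    drw. unfold Rminus, Rdiv. req. field. lra.
  - intros t. unfold zz. auto_derive. dsolve.
    drw. unfold Rminus, Rdiv. req. field. lra.
  - intros t. apply cont_of_der. unfold zz. auto_derive. dsolve.
  - intros t. apply cont_of_der. unfold zz. auto_derive. dsolve.
  - intros t Ht. rewrite phi2_dec by auto. rewrite rmax3. fold (cc a s). fold c.
    assert (b * t <= c). { apply (Rmult_le_compat_l b) in Ht; [|lra]. replace (b * (c / b)) with c in Ht by (field; lra). lra. }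
    rewrite Rmax_left by lra. unfold zz. ring.
  - intros t Ht. rewrite phi2_dec by auto. rewrite rmax3. fold (cc a s). fold c.
    assert (c <= b * t). { apply (Rmult_le_compat_l b) in Ht; [|lra]. replace (b * (c / b)) with c in Ht by (field; lra). lra. }
    rewrite Rmax_right by lra. unfold zz. ring.
  - replace 0 with (phi s * c * 0) by ring. apply limm_scal.
    apply limm_ext with (fun t => Phi (/ sig rho * t + (- rho * s / sig rho))).
    intros; rewrite zz_aff; auto.
    apply limm_comp_m. apply Phi_limm. apply aff_mm. apply Rinv_0_lt_compat; auto.
  - apply limp_scal. apply limp_plus; apply limp_scal.
    + apply limp_ext with (fun t => phi (/ sig rho * t + (- rho * s / sig rho))).
      intros; rewrite zz_aff; auto.
      apply limp_comp_p. apply phi_limp. apply aff_pp. apply Rinv_0_lt_compat; auto.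
    + apply limp_ext with (fun t => Phi (/ sig rho * t + (- rho * s / sig rho))).
      intros; rewrite zz_aff; auto.
      apply limp_comp_p. apply Phi_limp. apply aff_pp. apply Rinv_0_lt_compat; auto.
Qed.

Lemma phi_prod k r s : r * r = 1 + k ^ 2 -> phi (r * s) = s2p * (phi s * phi (k * s)).
Proof.
  intros Hr. assert (S := s2p_pos). assert (S2 := s2p_sq). unfold phi.
  replace (s2p * (/ s2p * exp (- s ^ 2 / 2) * (/ s2p * exp (- (k * s) ^ 2 / 2))))
    with (/ s2p * (exp (- s ^ 2 / 2) * exp (- (k * s) ^ 2 / 2))) by (field; lra).
  rewrite <- exp_plus. f_equal. f_equal.
  replace ((r * s) ^ 2) with ((r * r) * s ^ 2) by ring. rewrite Hr. field.
Qed.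

Definition hO (be ta al k s : R) := phi s * ((al - be) * s * Phi (k * s) + be * s + ta * phi (k * s)).
Definition QO (be ta al k r s : R) :=
  (al - be) * (- phi s * Phi (k * s) + k / (r * s2p) * Phi (r * s)) - be * phi s + ta / (r * s2p) * Phi (r * s).

Lemma QO_deriv be ta al k r s : 0 < r -> r * r = 1 + k ^ 2 -> is_derive (QO be ta al k r) s (hO be ta al k s).
Proof.
  intros Hr0 Hr. assert (S := s2p_pos). unfold QO, hO. auto_derive. dsolve.
  drw. rewrite (phi_prod k r s Hr). req. field. lra.
Qed.

Lemma hO_cont be ta al k s : continuous (hO be ta al k) s.
Proof. apply cont_of_der. unfold hO. auto_derive. dsolve. Qed.

Lemma QO_limm be ta al k r : 0 < r -> limm (QO be ta al k r) 0.
Proof.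
  intros Hr. unfold QO.
  replace 0 with ((al - be) * (0 + k / (r * s2p) * 0) - be * 0 + ta / (r * s2p) * 0) by ring.
  assert (LP : limm (fun s => Phi (r * s)) 0).
  { apply limm_ext with (fun s => Phi (r * s + 0)). intros; f_equal; ring.
    apply limm_comp_m. apply Phi_limm. apply aff_mm; auto. }
  apply limm_plus. 2: apply limm_scal; auto.
  apply limm_ext with (fun s => (al - be) * (- phi s * Phi (k * s) + k / (r * s2p) * Phi (r * s)) + (- be) * phi s).
  intros; ring.
  replace ((al - be) * (0 + k / (r * s2p) * 0) - be * 0) with ((al - be) * (0 + k / (r * s2p) * 0) + - be * 0) by ring.
  apply limm_plus. 2: apply limm_scal, phi_limm.
  apply limm_scal. apply limm_plus. 2: apply limm_scal; auto.
  apply limm_ext with (fun s => (-1 * phi s) * Phi (k * s)). intros; ring.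
  apply limm_mult0 with 1. replace 0 with (-1 * 0) by ring. apply limm_scal, phi_limm.
  intros; apply Phi_abs.
Qed.

Lemma QO_limp be ta al k r : 0 < r ->
  limp (QO be ta al k r) ((al - be) * (0 + k / (r * s2p) * 1) - be * 0 + ta / (r * s2p) * 1).
Proof.
  intros Hr. unfold QO.
  assert (LP : limp (fun s => Phi (r * s)) 1).
  { apply limp_ext with (fun s => Phi (r * s + 0)). intros; f_equal; ring.
    apply limp_comp_p. apply Phi_limp. apply aff_pp; auto. }
  apply limp_plus. 2: apply limp_scal; auto.
  apply limp_ext with (fun s => (al - be) * (- phi s * Phi (k * s) + k / (r * s2p) * Phi (r * s)) + (- be) * phi s).
  intros; ring.
  replace ((al - be) * (0 + k / (r * s2p) * 1) - be * 0) with ((al - be) * (0 + k / (r * s2p) * 1) + - be * 0) by ring.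
  apply limp_plus. 2: apply limp_scal, phi_limp.
  apply limp_scal. apply limp_plus. 2: apply limp_scal; auto.
  apply limp_ext with (fun s => (-1 * phi s) * Phi (k * s)). intros; ring.
  apply limp_mult0 with 1. replace 0 with (-1 * 0) by ring. apply limp_scal, phi_limp.
  intros; apply Phi_abs.
Qed.

Definition DD (rho a b : R) := sqrt (a ^ 2 - 2 * rho * a * b + b ^ 2).

Lemma outer_gen rho a b : -1 < rho < 1 -> 0 <= a -> 0 < b ->
  improper_int (Fin rho a b) ((a + b + DD rho a b) / (2 * s2p)).
Proof.
  intros Hr Ha Hb.
  assert (P := sig_pos rho Hr). assert (Q := sig_sq rho Hr). assert (S := s2p_pos).
  set (sg := sig rho) in *.
  assert (HD2 : 0 < a ^ 2 - 2 * rho * a * b + b ^ 2).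
  { replace (a ^ 2 - 2 * rho * a * b + b ^ 2) with ((a - b * rho) ^ 2 + b^2 * (sg * sg)) by (rewrite Q; ring).
    assert (0 < b ^ 2 * (sg * sg)) by (apply Rmult_lt_0_compat; nra). generalize (pow2_ge_0 (a - b*rho)); lra. }
  assert (HD : 0 < DD rho a b) by (apply sqrt_lt_R0; auto).
  assert (HDD : DD rho a b * DD rho a b = a ^ 2 - 2 * rho * a * b + b ^ 2) by (apply sqrt_sqrt; lra).
  set (D := DD rho a b) in *.
  set (be := b * rho). set (ta := b * sg).
  set (k0 := - rho / sg). set (k1 := (a / b - rho) / sg).
  set (r0 := / sg). set (r1 := D / (b * sg)).
  assert (R0 : 0 < r0) by (apply Rinv_0_lt_compat; auto).
  assert (R1 : 0 < r1) by (apply Rdiv_lt_0_compat; auto; apply Rmult_lt_0_compat; auto).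
  assert (R0s : r0 * r0 = 1 + k0 ^ 2).
  { unfold r0, k0. apply (Rmult_eq_reg_r (sg * sg)). 2: nra.
    replace (/ sg * / sg * (sg * sg)) with 1 by (field; lra).
    replace ((1 + (- rho / sg) ^ 2) * (sg * sg)) with (sg * sg + rho ^ 2) by (field; lra). rewrite Q; ring. }
  assert (R1s : r1 * r1 = 1 + k1 ^ 2).
  { unfold r1, k1. apply (Rmult_eq_reg_r ((b * sg) * (b * sg))). 2: apply Rgt_not_eq; apply Rmult_lt_0_compat; apply Rmult_lt_0_compat; auto.
    replace (D / (b * sg) * (D / (b * sg)) * (b * sg * (b * sg))) with (D * D) by (field; lra).
    replace ((1 + ((a / b - rho) / sg) ^ 2) * (b * sg * (b * sg))) with (b ^ 2 * (sg * sg) + (a - b * rho) ^ 2) by (field; lra).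
    rewrite HDD, Q. ring. }
  assert (V := improper_split (Fin rho a b) (hO be ta 0 k0) (hO be ta a k1)
     (QO be ta 0 k0 r0) (QO be ta a k1 r1) 0 0
     ((a - be) * (0 + k1 / (r1 * s2p) * 1) - be * 0 + ta / (r1 * s2p) * 1)).
  match type of V with _ -> _ -> _ -> _ -> _ -> _ -> _ -> _ -> improper_int _ ?v =>
    replace ((a + b + D) / (2 * s2p)) with v end.
  - apply V.
    + intros; apply QO_deriv; auto.
    + intros; apply QO_deriv; auto.
    + intros; apply hO_cont.
    + intros; apply hO_cont.
    + intros s Hs. unfold Fin, hO. unfold cc. rewrite Rmax_right by nra.
      replace (zz rho s (0 / b)) with (k0 * s) by (unfold zz, k0; fold sg; field; lra).
      unfold ta, be. fold sg. req. ring.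
    + intros s Hs. unfold Fin, hO. unfold cc. rewrite Rmax_left by nra.
      replace (zz rho s (a * s / b)) with (k1 * s) by (unfold zz, k1; fold sg; field; split; lra).
      unfold ta, be. fold sg. req. ring.
    + apply QO_limm; auto.
    + apply QO_limp; auto.
  - unfold QO. rewrite !Rmult_0_r. rewrite phi0, Phi0.
    unfold r0, r1, k0, k1, ta, be.
    replace (- rho / sg / (/ sg * s2p)) with (- rho / s2p) by (field; lra).
    replace (b * sg / (/ sg * s2p)) with (b * (sg * sg) / s2p) by (field; lra).
    replace ((a / b - rho) / sg / (D / (b * sg) * s2p)) with ((a - b * rho) / (D * s2p)) by (field; repeat split; lra).
    replace (b * sg / (D / (b * sg) * s2p)) with (b * b * (sg * sg) / (D * s2p)) by (field; repeat split; lra).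
    rewrite Q.
    apply (Rmult_eq_reg_r (2 * s2p * D)). 2: apply Rgt_not_eq; apply Rmult_lt_0_compat; lra.
    field_simplify. 2-3: lra.
    replace (D ^ 2) with (D * D) by ring. rewrite HDD. ring.
Qed.

Lemma inner0 rho a s : -1 < rho < 1 ->
  improper_int (fun t => Rmax (a * s) 0 * phi2 rho s t) (phi s * Rmax (a * s) 0).
Proof.
  intros Hr. assert (P := sig_pos rho Hr). set (c := Rmax (a * s) 0).
  assert (V := improper_split (fun t => c * phi2 rho s t)
    (fun t => phi s * c * (/ sig rho * phi (zz rho s t)))
    (fun t => phi s * c * (/ sig rho * phi (zz rho s t)))
    (fun t => phi s * c * Phi (zz rho s t))
    (fun t => phi s * c * Phi (zz rho s t)) 0 0 (phi s * c * 1)).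
  match type of V with _ -> _ -> _ -> _ -> _ -> _ -> _ -> _ -> improper_int _ ?v =>
    replace (phi s * c) with v by ring end.
  assert (DQ : forall t, is_derive (fun t => phi s * c * Phi (zz rho s t)) t (phi s * c * (/ sig rho * phi (zz rho s t)))).
  { intros t. unfold zz. auto_derive. dsolve. drw. unfold Rminus, Rdiv. req. field. lra. }
  assert (CQ : forall t, continuous (fun t => phi s * c * (/ sig rho * phi (zz rho s t))) t).
  { intros t. apply cont_of_der. unfold zz. auto_derive. dsolve. }
  apply V; auto.
  - intros t _. rewrite phi2_dec by auto. unfold zz. ring.
  - intros t _. rewrite phi2_dec by auto. unfold zz. ring.
  - replace 0 with (phi s * c * 0) by ring. apply limm_scal.
    apply limm_ext with (fun t => Phi (/ sig rho * t + (- rho * s / sig rho))).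
    intros; rewrite zz_aff; auto.
    apply limm_comp_m. apply Phi_limm. apply aff_mm. apply Rinv_0_lt_compat; auto.
  - apply limp_scal.
    apply limp_ext with (fun t => Phi (/ sig rho * t + (- rho * s / sig rho))).
    intros; rewrite zz_aff; auto.
    apply limp_comp_p. apply Phi_limp. apply aff_pp. apply Rinv_0_lt_compat; auto.
Qed.

Lemma outer0 a : 0 <= a -> improper_int (fun s => phi s * Rmax (a * s) 0) (a / s2p).
Proof.
  intros Ha. assert (S := s2p_pos).
  assert (V := improper_split (fun s => phi s * Rmax (a * s) 0) (fun _ => 0) (fun s => a * s * phi s)
     (fun _ => 0) (fun s => - a * phi s) 0 0 0).
  match type of V with _ -> _ -> _ -> _ -> _ -> _ -> _ -> _ -> improper_int _ ?v =>
    replace (a / s2p) with v end.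
  - apply V.
    + intros t. auto_derive; auto.
    + intros t. auto_derive. dsolve. drw. req. ring.
    + intros; apply continuous_const.
    + intros t. apply cont_of_der. auto_derive. dsolve.
    + intros t Ht. rewrite Rmax_right by nra. ring.
    + intros t Ht. rewrite Rmax_left by nra. ring.
    + apply limm_const.
    + assert (H := limp_scal (-a) phi 0 phi_limp). rewrite Rmult_0_r in H. exact H.
  - rewrite phi0. field. lra.
Qed.

Lemma bvn0 rho a : -1 < rho < 1 -> 0 <= a -> bvn_expect rho (fun s t => Rmax (a * s) 0) (a / s2p).
Proof.
  intros Hr Ha. exists (fun s => phi s * Rmax (a * s) 0). split.
  - intros s. apply inner0; auto.
  - apply outer0; auto.
Qed.

Lemma bvn_gen rho a b : -1 < rho < 1 -> 0 <= a -> 0 < b ->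
  bvn_expect rho (fun s t => Rmax (Rmax (a * s) (b * t)) 0) ((a + b + DD rho a b) / (2 * s2p)).
Proof.
  intros Hr Ha Hb. exists (Fin rho a b). split.
  - intros s. apply inner_gen; auto.
  - apply outer_gen; auto.
Qed.

Lemma sqrt_sq_div N z : 0 <= N -> 0 < z -> sqrt (N / z ^ 2) = sqrt N / z.
Proof.
  intros HN Hz. replace (N / z ^ 2) with ((sqrt N / z) ^ 2).
  apply sqrt_pow2. apply Rdiv_le_0_compat; [apply sqrt_pos | lra].
  unfold Rdiv. rewrite Rpow_mult_distr. replace (sqrt N ^ 2) with (sqrt N * sqrt N) by ring.
  rewrite sqrt_sqrt by auto. rewrite pow_inv. ring.
Qed.

Lemma claim3 rho x y : -1 < rho < 1 -> 0 <= x -> 0 <= y -> 0 < x + y ->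
     bvn_expect rho
       (fun s t => Rmax (Rmax (x * (sqrt (2 * PI) * s)) (y * (sqrt (2 * PI) * t))) 0)
       (/ 2 * (x + y) *
        (1 + sqrt (1 - 2 * (rho + 1) * (x * y / (x + y) ^ 2)))).
Proof.
  intros Hr Hx Hy Hxy. fold s2p. assert (S := s2p_pos).
  set (N := x ^ 2 - 2 * rho * x * y + y ^ 2).
  assert (HN : 0 <= N).
  { unfold N. replace (x ^ 2 - 2 * rho * x * y + y ^ 2) with ((x - rho * y) ^ 2 + y ^ 2 * (1 - rho ^ 2)) by ring.
    assert (0 <= y ^ 2 * (1 - rho ^ 2)) by (apply Rmult_le_pos; [apply pow2_ge_0 | simpl; nra]).
    generalize (pow2_ge_0 (x - rho * y)); lra. }
  assert (E1 : 1 - 2 * (rho + 1) * (x * y / (x + y) ^ 2) = N / (x + y) ^ 2).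
  { unfold N. field. lra. }
  rewrite E1, sqrt_sq_div by auto.
  destruct (Req_dec y 0) as [Y0|Y0].
  - subst y. replace (fun s t : R => Rmax (Rmax (x * (s2p * s)) (0 * (s2p * t))) 0)
      with (fun s t : R => Rmax ((x * s2p) * s) 0).
    2:{ apply functional_extensionality; intro s; apply functional_extensionality; intro t.
        rewrite Rmult_0_l. unfold Rmax. repeat destruct Rle_dec; try lra; ring. }
    replace (/ 2 * (x + 0) * (1 + sqrt N / (x + 0))) with (x * s2p / s2p).
    apply bvn0; auto. apply Rmult_le_pos; lra.
    unfold N. replace (x ^ 2 - 2 * rho * x * 0 + 0 ^ 2) with (x ^ 2) by ring.
    rewrite sqrt_pow2 by lra. field. lra.
  - replace (fun s t : R => Rmax (Rmax (x * (s2p * s)) (y * (s2p * t))) 0)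
      with (fun s t : R => Rmax (Rmax ((x * s2p) * s) ((y * s2p) * t)) 0).
    2:{ apply functional_extensionality; intro s; apply functional_extensionality; intro t.
        f_equal. f_equal; ring. }
    replace (/ 2 * (x + y) * (1 + sqrt N / (x + y))) with
      ((x * s2p + y * s2p + DD rho (x * s2p) (y * s2p)) / (2 * s2p)).
    apply bvn_gen; auto. apply Rmult_le_pos; lra. apply Rmult_lt_0_compat; lra.
    unfold DD. replace ((x * s2p) ^ 2 - 2 * rho * (x * s2p) * (y * s2p) + (y * s2p) ^ 2)
      with ((s2p * sqrt N) ^ 2).
    rewrite sqrt_pow2. field. lra.
    apply Rmult_le_pos. lra. apply sqrt_pos.
    rewrite Rpow_mult_distr. replace (sqrt N ^ 2) with (sqrt N * sqrt N) by ring.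
    rewrite sqrt_sqrt by auto. unfold N. ring.
Qed.

Theorem mainTheorem10 (rho : R) (hrho : -1 < rho < 1) :
  bvn_expect rho (fun s t => Rmax (sqrt (2 * PI) * s) 0) 1 /\
  bvn_expect rho (fun s t => Rmax (sqrt (2 * PI) * t) 0) 1 /\
  (forall x y : R, 0 <= x -> 0 <= y -> 0 < x + y ->
     bvn_expect rho
       (fun s t => Rmax (Rmax (x * (sqrt (2 * PI) * s)) (y * (sqrt (2 * PI) * t))) 0)
       (/ 2 * (x + y) *
        (1 + sqrt (1 - 2 * (rho + 1) * (x * y / (x + y) ^ 2))))) /\
  (forall t : R, 0 <= t <= 1 ->
     bvn_expect rho
       (fun s u => Rmax (Rmax ((1 - t) * (sqrt (2 * PI) * s)) (t * (sqrt (2 * PI) * u))) 0)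
       (/ 2 * (1 + sqrt (1 - 2 * (rho + 1) * t * (1 - t))))).
Proof.
  assert (S := s2p_pos).
  split; [|split; [|split]].
  - fold s2p. replace 1 with (s2p / s2p) by (field; lra). apply bvn0; auto; lra.
  - replace (fun s t : R => Rmax (sqrt (2 * PI) * t) 0)
      with (fun s t : R => Rmax (sqrt (2 * PI) * t) 0).
    assert (H := claim3 rho 0 1 hrho ltac:(lra) ltac:(lra) ltac:(lra)).
    replace (/ 2 * (0 + 1) * (1 + sqrt (1 - 2 * (rho + 1) * (0 * 1 / (0 + 1) ^ 2)))) with 1 in H.
    2:{ replace (1 - 2 * (rho + 1) * (0 * 1 / (0 + 1) ^ 2)) with 1 by field. rewrite sqrt_1. field. }
    replace (fun s t : R => Rmax (Rmax (0 * (sqrt (2 * PI) * s)) (1 * (sqrt (2 * PI) * t))) 0)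
      with (fun s t : R => Rmax (sqrt (2 * PI) * t) 0) in H. exact H.
    apply functional_extensionality; intro s; apply functional_extensionality; intro t.
    rewrite Rmult_0_l, Rmult_1_l. fold s2p. unfold Rmax. repeat destruct Rle_dec; lra.
    reflexivity.
  - intros; apply claim3; auto.
  - intros t Ht. assert (H := claim3 rho (1 - t) t hrho ltac:(lra) ltac:(lra) ltac:(lra)).
    replace (/ 2 * (1 - t + t) * (1 + sqrt (1 - 2 * (rho + 1) * ((1 - t) * t / (1 - t + t) ^ 2))))
      with (/ 2 * (1 + sqrt (1 - 2 * (rho + 1) * t * (1 - t)))) in H. exact H.
    replace (1 - 2 * (rho + 1) * ((1 - t) * t / (1 - t + t) ^ 2)) with (1 - 2 * (rho + 1) * t * (1 - t)) by (replace (1 - t + t) with 1 by ring; field).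
    ring.
Qed.
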